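(* Let $-\infty\le a<b\le+\infty$, $I=(a,b)$, $n\in\mathbb N$ with $n>1$, and let $\{I_j\}_{j=1}^n$ and $\{\widehat I_j\}_{j=1}^n$ be partitions in $\mathcal C_n(I)$. Then there exist indices $j_1,j_2\in\{1,\dots,n\}$ such that \[ I_{j_1}\subseteq \widehat I_{j_1}\qquad\text{and}\qquad \widehat I_{j_2}\subseteq I_{j_2}. \] Moreover, if $\{I_j\}$ and $\{\widehat I_j\}$ are distinct partitions, the indices can be chosen so that both inclusions are strict.
   Context: $\mathcal C_n(I)$ is the class of partitions $\{I_j\}_{j=1}^n$ of $I$ into open intervals $I_j=(x_{j-1},x_j)$, where $x_0:=a$, $x_n:=b$ and $x_{j-1}\le x_j$ for $1\le j\le n$ (some $I_j$ may be empty). *)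

(* Defs.v *)
From HB Require Import structures.
From mathcomp Require Import all_boot all_order all_algebra.
From mathcomp Require Import all_classical all_reals ereal.
Set Implicit Arguments. Unset Strict Implicit. Unset Printing Implicit Defensive.
Import Order.TTheory GRing.Theory Num.Theory.
Local Open Scope classical_set_scope.
Local Open Scope ring_scope.

(* A partition in C_n(I), I = (a,b), is given by its extended-real break points
   x 0 = a <= x 1 <= ... <= x n = b (values of x beyond n are irrelevant). *)
Definition Cn_points (R : realType) (a b : \bar R) (n : nat) (x : nat -> \bar R) : Prop :=
  x 0%N = a /\ x n = b /\ forall j : nat, (0 < j <= n)%N -> (x j.-1 <= x j)%E.

Definition Cn_interval (R : realType) (x : nat -> \bar R) (j : nat) : set R :=
  [set t : R | (x j.-1 < t%:E)%E /\ (t%:E < x j)%E].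

(* Main.v *)
Require Import Defs.
From HB Require Import structures.
From mathcomp Require Import all_boot all_order all_algebra.
From mathcomp Require Import all_classical all_reals ereal.
From mathcomp Require Import lra.
Import Order.TTheory GRing.Theory Num.Theory.
Local Open Scope classical_set_scope.

Lemma ed_dense {R : realType} {u v : \bar R} : (u < v)%E ->
  exists t : R, (u < t%:E)%E /\ (t%:E < v)%E.
Proof.
case: u => [r| |]; case: v => [s| |] //.
- rewrite lte_fin => h; exists ((r + s) / 2)%R; rewrite !lte_fin; split; lra.
- move=> _; exists (r + 1)%R; split; last exact: ltey.
  rewrite lte_fin; lra.
- move=> _; exists (s - 1)%R; split; first exact: ltNye.
  rewrite lte_fin; lra.
- move=> _; exists 0%R; split; [exact: ltNye | exact: ltey].
Qed.

Lemma sub_of {R : realType} (x y : nat -> \bar R) j :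
  (y j.-1 <= x j.-1)%E -> (x j <= y j)%E -> Cn_interval x j `<=` Cn_interval y j.
Proof.
move=> h1 h2 t [t1 t2]; split.
- exact: le_lt_trans h1 t1.
- exact: lt_le_trans t2 h2.
Qed.

Lemma proper_of {R : realType} (x y : nat -> \bar R) j :
  (x j.-1 <= x j)%E ->
  (y j.-1 <= x j.-1)%E -> (x j <= y j)%E ->
  ((y j.-1 < x j.-1)%E \/ (x j < y j)%E) -> Cn_interval x j `<` Cn_interval y j.
Proof.
move=> hx h1 h2 h3; split; first exact: sub_of.
move=> hs; case: h3 => h3.
- have [t [t1 t2]] := ed_dense h3.
  have : Cn_interval y j t.
    split => //; apply: lt_le_trans t2 _; exact: le_trans hx h2.
  by move/hs => [/lt_trans /(_ t2)]; rewrite ltxx.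
- have [t [t1 t2]] := ed_dense h3.
  have : Cn_interval y j t.
    split => //; apply: le_lt_trans t1; exact: le_trans h1 hx.
  by move/hs => [_ /lt_trans /(_ t1)]; rewrite ltxx.
Qed.

Lemma find_weak {R : realType} {n : nat} {x y : nat -> \bar R} :
  (0 < n)%N -> x 0%N = y 0%N -> x n = y n ->
  exists j, (1 <= j <= n)%N /\ (y j.-1 <= x j.-1)%E /\ (x j <= y j)%E.
Proof.
move=> n0 e0 en.
suff H : forall m, (1 <= m <= n)%N -> (exists j, (1 <= j <= m)%N /\
   (y j.-1 <= x j.-1)%E /\ (x j <= y j)%E) \/ (y m < x m)%E.
  have Hn : (1 <= n <= n)%N by rewrite n0 leqnn.
  have [[j [hj hh]]|] := H n Hn.
  - exists j; split => //; move: hj => /andP[-> /leq_trans ->] //.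
  - by rewrite en ltxx.
elim => [|m IH] // /andP[_ hm].
case: m IH hm => [|m] IH hm.
  case: (leP (x 1%N) (y 1%N)) => h; last by right.
  by left; exists 1%N; split => //=; rewrite e0.
have Hm : (1 <= m.+1 <= n)%N by apply/andP; split => //; exact: ltnW.
have [[j [hj hh]]|hlt] := IH Hm.
  left; exists j; split => //; move: hj => /andP[-> /leq_trans ->] //.
case: (leP (x m.+2) (y m.+2)) => h; last by right.
by left; exists m.+2; split => //=; split => //; exact: ltW.
Qed.

Lemma find_up {R : realType} {n k : nat} {x y : nat -> \bar R} :
  x n = y n -> (k <= n)%N -> (y k < x k)%E ->
  exists j, (1 <= j <= n)%N /\ (y j.-1 < x j.-1)%E /\ (x j <= y j)%E.
Proof.
move=> en kn hk.
suff H : forall d, (k + d <= n)%N -> (exists j, (1 <= j <= n)%N /\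
   (y j.-1 < x j.-1)%E /\ (x j <= y j)%E) \/ (y (k + d)%N < x (k + d)%N)%E.
  have Hk : (k + (n - k) <= n)%N by rewrite subnKC.
  have [//|] := H (n - k)%N Hk.
  by rewrite subnKC // en ltxx.
elim => [|d IH] hd; first by rewrite addn0; right.
have hd' : (k + d <= n)%N by rewrite addnS in hd; exact: ltnW.
have [a|hlt] := IH hd'; first by left.
case: (leP (x (k + d.+1)%N) (y (k + d.+1)%N)) => h; last by right.
left; exists (k + d.+1)%N; split; first by rewrite hd andbT addnS.
by rewrite addnS in h *.
Qed.

Lemma find_down {R : realType} {k : nat} {x y : nat -> \bar R} :
  x 0%N = y 0%N -> (x k < y k)%E ->
  exists j, (1 <= j <= k)%N /\ (y j.-1 <= x j.-1)%E /\ (x j < y j)%E.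
Proof.
move=> e0 hk.
suff H : forall d, (d <= k)%N -> (exists j, (1 <= j <= k)%N /\
   (y j.-1 <= x j.-1)%E /\ (x j < y j)%E) \/ (x (k - d)%N < y (k - d)%N)%E.
  have [a|] := H k (leqnn k); first by [].
  by rewrite subnn e0 ltxx.
elim => [|d IH] hd; first by rewrite subn0; right.
have [a|hlt] := IH (ltnW hd); first by left.
have E : (k - d)%N = (k - d.+1).+1 by rewrite subnS prednK // subn_gt0.
case: (leP (y (k - d.+1)%N) (x (k - d.+1)%N)) => h; last by right.
left; exists (k - d)%N; split.
  by rewrite subn_gt0 hd leq_subr.
by rewrite E /=; split => //; rewrite -E.
Qed.

Lemma gen_strict {R : realType} {n k : nat} {u v : nat -> \bar R} :
  u 0%N = v 0%N -> u n = v n ->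
  (forall j, (0 < j <= n)%N -> (u j.-1 <= u j)%E) -> (k <= n)%N -> u k <> v k ->
  exists j, (1 <= j <= n)%N /\ Cn_interval u j `<` Cn_interval v j.
Proof.
move=> u0 un um kn uk.
  have [h|h] : (u k < v k)%E \/ (v k < u k)%E.
    by case: (ltgtP (u k) (v k)) uk => h // _; [left|right].
  - have [j' [hj' [p1 p2]]] := find_down u0 h.
    have hj'' : (0 < j' <= n)%N.
      by case/andP: hj' => q1 q2; rewrite q1 (leq_trans q2 kn).
    exists j'; split; first exact: hj''.
    apply: proper_of; [exact: (um _ hj'')|exact: p1|exact: (ltW p2)|by right].
  - have [j' [hj' [p1 p2]]] := @find_up R n k u v un kn h.
    exists j'; split => //.
    apply: proper_of; [exact: (um _ hj')| exact: (ltW p1)| exact: p2| by left].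
Qed.

Lemma weak_part {R : realType} {a b : \bar R} {n : nat} {x y : nat -> \bar R} :
  (a < b)%E -> (1 < n)%N ->
  Cn_points a b n x -> Cn_points a b n y ->
  (exists j1 j2 : nat, (1 <= j1 <= n)%N /\ (1 <= j2 <= n)%N /\
     Cn_interval x j1 `<=` Cn_interval y j1 /\ Cn_interval y j2 `<=` Cn_interval x j2).
Proof.
move=> ab n1 [x0 [xn xm]] [y0 [yn ym]].
have n0 : (0 < n)%N by exact: ltnW.
have e0 : x 0%N = y 0%N by rewrite x0 y0.
have en : x n = y n by rewrite xn yn.
  have [j1 [h1 [a1 b1]]] := find_weak n0 e0 en.
have [j2 [h2 [a2 b2]]] := find_weak n0 (esym e0) (esym en).
exists j1, j2; split => //; split => //; split; exact: sub_of.
Qed.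

Lemma strict_part {R : realType} {a b : \bar R} {n : nat} {x y : nat -> \bar R} :
  (a < b)%E -> (1 < n)%N ->
  Cn_points a b n x -> Cn_points a b n y ->
  ((exists j : nat, (1 <= j <= n)%N /\ Cn_interval x j <> Cn_interval y j) ->
   exists j1 j2 : nat, (1 <= j1 <= n)%N /\ (1 <= j2 <= n)%N /\
     Cn_interval x j1 `<` Cn_interval y j1 /\ Cn_interval y j2 `<` Cn_interval x j2).
Proof.
move=> ab n1 [x0 [xn xm]] [y0 [yn ym]].
have n0 : (0 < n)%N by exact: ltnW.
have e0 : x 0%N = y 0%N by rewrite x0 y0.
have en : x n = y n by rewrite xn yn.
move=> [j [hj hne]].
have [k [kn xk]] : exists k, (k <= n)%N /\ x k <> y k.
  apply: contrapT => hall; apply: hne.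
  have eq : forall k, (k <= n)%N -> x k = y k.
    move=> k kn; apply: contrapT => hk; apply: hall; by exists k.
  case/andP: hj => _ hjn.
  have hj1 : (j.-1 <= n)%N by exact: (leq_trans (leq_pred j) hjn).
  by rewrite /Cn_interval (eq _ hj1) (eq _ hjn).
have G1 := gen_strict e0 en xm kn xk.
case: G1 => i1 [h1 p1].
have yk : y k <> x k by move=> e; apply: xk; rewrite e.
have e0' : y 0%N = x 0%N by rewrite e0.
have en' : y n = x n by rewrite en.
have G2 := gen_strict e0' en' ym kn yk.
case: G2 => i2 [h2 p2].
exists i1, i2; split; first exact: h1.
split; first exact: h2.
split; [exact: p1|exact: p2].
Qed.

Theorem lemma2p12 (R : realType) (a b : \bar R) (n : nat) (x y : nat -> \bar R) :
  (a < b)%E -> (1 < n)%N ->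
  Cn_points a b n x -> Cn_points a b n y ->
  (exists j1 j2 : nat, (1 <= j1 <= n)%N /\ (1 <= j2 <= n)%N /\
     Cn_interval x j1 `<=` Cn_interval y j1 /\ Cn_interval y j2 `<=` Cn_interval x j2) /\
  ((exists j : nat, (1 <= j <= n)%N /\ Cn_interval x j <> Cn_interval y j) ->
   exists j1 j2 : nat, (1 <= j1 <= n)%N /\ (1 <= j2 <= n)%N /\
     Cn_interval x j1 `<` Cn_interval y j1 /\ Cn_interval y j2 `<` Cn_interval x j2).
Proof.
move=> ab n1 hx hy; split; [exact: (weak_part ab n1 hx hy)|exact: (strict_part ab n1 hx hy)].
Qed.
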